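(* With notation as in the context, for each $s\in\{3,4,5,6,7\}$ there is a unique function $h_s:\Delta_s^+\to\{1,\dots,s\}$ such that $h_s(\alpha_s)=s$ and the map $\beta\mapsto v_{h_s(\beta)}$ is an open map of graphs from $\mathsf{H}_s$ to $\mathsf{Dyn}(E_s)$. For $s=8$ there is no function $h:\Delta_8^+\to\{1,\dots,8\}$ with $h(\alpha_8)=8$ such that $\beta\mapsto v_{h(\beta)}$ is an open map from $\mathsf{H}_8$ to $\mathsf{Dyn}(E_8)$.
   Context: Let $\Delta(E_8)$ be the root system of type $E_8$ with simple roots $\alpha_1,\dots,\alpha_8$, where $\langle\alpha_i,\alpha_i\rangle=2$, $\langle\alpha_i,\alpha_j\rangle=-1$ if $\{i,j\}\in\{\{1,3\},\{3,4\},\{4,5\},\{5,6\},\{6,7\},\{7,8\},\{2,4\}\}$, and $0$ otherwise; $\Delta^+$ denotes its positive roots and $\beta=\sum\beta^i\alpha_i$. For $\beta\in\Delta^+$ let $m(\beta)=\max\{i:\beta^i\ne0\}$, and define the strata $\Delta_1^+=\{\alpha_1\}$, $\Delta_3^+=\{\beta\in\Delta^+: m(\beta)\in\{2,3\}\}$, $\Delta_s^+=\{\beta\in\Delta^+: m(\beta)=s\}$ for $4\le s\le 8$. For $3\le s\le8$, $\mathsf{Dyn}(E_s)$ is the graph with vertices $v_1,\dots,v_s$, with $v_i,v_j$ adjacent iff $\langle\alpha_i,\alpha_j\rangle=-1$. $\mathsf{H}_s$ is the graph with vertex set $\Delta_s^+$, where $\beta,\beta'$ are adjacent iff $\beta-\beta'$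 or $\beta'-\beta$ is one of the simple roots $\alpha_1,\dots,\alpha_8$. An open map from a graph $P$ to a graph $R$ is a function $h$ from vertices of $P$ to vertices of $R$ which is a graph homomorphism (adjacent vertices go to adjacent vertices) and is locally surjective (for each vertex $u$ of $P$, $h$ maps the set of neighbours of $u$ onto the set of neighbours of $h(u)$). *)

(* Defs.v *)
(* Root system E_8 with the paper's 1-based numbering of simple roots. *)
From mathcomp Require Import all_boot all_order all_algebra.
Set Implicit Arguments. Unset Strict Implicit. Unset Printing Implicit Defensive.
Import GRing.Theory Num.Theory.

(* An element beta = sum_i beta^i alpha_i of the positive cone of the root lattice
   is encoded by its coefficient function i |-> beta^i (i in 1..8, zero elsewhere). *)
Definition vec := nat -> nat.

Definition dyn_adj (i j : nat) : bool :=
  [|| ((i, j) == (1, 3)), ((i, j) == (3, 4)), ((i, j) == (4, 5)), ((i, j) == (5, 6)),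
      ((i, j) == (6, 7)), ((i, j) == (7, 8)), ((i, j) == (2, 4)),
      ((j, i) == (1, 3)), ((j, i) == (3, 4)), ((j, i) == (4, 5)), ((j, i) == (5, 6)),
      ((j, i) == (6, 7)), ((j, i) == (7, 8)) | ((j, i) == (2, 4))].

Definition form (i j : nat) : int :=
  if i == j then 2%R else if dyn_adj i j then (-1)%R else 0%R.

Definition normsq (b : vec) : int :=
  (\sum_(1 <= i < 9) \sum_(1 <= j < 9) form i j * (b i)%:Z * (b j)%:Z)%R.

Definition supported (b : vec) : Prop := forall i, (i == 0) || (8 < i) -> b i = 0.

(* Positive roots of E_8: nonzero nonnegative combinations of simple roots
   of squared length 2 (E_8 is simply laced). *)
Definition pos_root (b : vec) : Prop :=
  supported b /\ (exists i, b i != 0) /\ normsq b = 2%R.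

Definition alpha (k : nat) : vec := fun i => (i == k : nat).

Definition mval (b : vec) (s : nat) : Prop := b s != 0 /\ forall i, s < i -> b i = 0.

Definition stratum (s : nat) (b : vec) : Prop :=
  pos_root b /\ (if s == 3 then mval b 2 \/ mval b 3 else mval b s).

Definition diff_simple (b b' : vec) : Prop :=
  exists2 k, 1 <= k <= 8 & forall i, b i = b' i + (i == k).

Definition H_adj (b b' : vec) : Prop := diff_simple b b' \/ diff_simple b' b.

Definition Dyn_adj (s i j : nat) : Prop :=
  [/\ 1 <= i <= s, 1 <= j <= s & dyn_adj i j].

(* beta |-> v_{h beta} is an open map H_s -> Dyn(E_s), with h : Delta_s^+ -> {1..s}
   and h(alpha_s) = s. *)
Definition good_h (s : nat) (h : vec -> nat) : Prop :=
  [/\ forall b, stratum s b -> 1 <= h b <= s,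
      h (alpha s) = s,
      (forall b b', stratum s b -> stratum s b' -> H_adj b b' -> Dyn_adj s (h b) (h b')) &
      (forall b, stratum s b -> forall j, Dyn_adj s (h b) j ->
         exists b', [/\ stratum s b', H_adj b b' & h b' = j])].

(* Main.v *)
Require Import Defs.
From Stdlib Require Import ZArith Lia FunctionalExtensionality.
From mathcomp Require Import all_boot all_order all_algebra.
From mathcomp Require Import ring lra zify.
Set Implicit Arguments. Unset Strict Implicit. Unset Printing Implicit Defensive.
Import GRing.Theory Num.Theory.

Definition S2 (b:vec) : nat := b 1 * b 1 + b 2 * b 2 + b 3 * b 3 + b 4 * b 4 + b 5 * b 5 + b 6 * b 6 + b 7 * b 7 + b 8 * b 8.
Definition Se (b:vec) : nat := b 1 * b 3 + b 3 * b 4 + b 4 * b 5 + b 5 * b 6 + b 6 * b 7 + b 7 * b 8 + b 2 * b 4.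

Lemma normsqE b : normsq b = (2 * (S2 b)%:Z - 2 * (Se b)%:Z)%R.
Proof.
rewrite /normsq /S2 /Se unlock /= /Defs.form /= !PoszD !PoszM.
ring.
Qed.

Lemma normsq2 b : normsq b = 2%R -> S2 b = Se b + 1.
Proof. rewrite normsqE => H. lia. Qed.

Lemma normsq2' b : S2 b = Se b + 1 -> normsq b = 2%R.
Proof. rewrite normsqE => H. lia. Qed.
Section B.
Local Open Scope Z_scope.
Lemma bnd1 (x1 x2 x3 x4 x5 x6 x7 x8 : Z) (H : x1*x1+x2*x2+x3*x3+x4*x4+x5*x5+x6*x6+x7*x7+x8*x8 = 1 + x1*x3 + x3*x4 + x4*x5 + x5*x6 + x6*x7 + x7*x8 + x2*x4) : x1*x1 <= 8.
Proof.
  pose proof (Z.square_nonneg ((58)*x1 + (-33)*x3)).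
  pose proof (Z.square_nonneg ((2)*x2 + (-1)*x4)).
  pose proof (Z.square_nonneg ((83)*x3 + (-58)*x4)).
  pose proof (Z.square_nonneg ((133)*x4 + (-166)*x5)).
  pose proof (Z.square_nonneg ((100)*x5 + (-133)*x6)).
  pose proof (Z.square_nonneg ((67)*x6 + (-100)*x7)).
  pose proof (Z.square_nonneg ((34)*x7 + (-67)*x8)).
  pose proof (Z.square_nonneg ((1)*x8)).
  lia.
Qed.
Lemma bnd2 (x1 x2 x3 x4 x5 x6 x7 x8 : Z) (H : x1*x1+x2*x2+x3*x3+x4*x4+x5*x5+x6*x6+x7*x7+x8*x8 = 1 + x1*x3 + x3*x4 + x4*x5 + x5*x6 + x6*x7 + x7*x8 + x2*x4) : x2*x2 <= 16.
Proof.
  pose proof (Z.square_nonneg ((2)*x1 + (-1)*x3)).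
  pose proof (Z.square_nonneg ((122)*x2 + (-65)*x4)).
  pose proof (Z.square_nonneg ((3)*x3 + (-2)*x4)).
  pose proof (Z.square_nonneg ((293)*x4 + (-366)*x5)).
  pose proof (Z.square_nonneg ((220)*x5 + (-293)*x6)).
  pose proof (Z.square_nonneg ((147)*x6 + (-220)*x7)).
  pose proof (Z.square_nonneg ((74)*x7 + (-147)*x8)).
  pose proof (Z.square_nonneg ((1)*x8)).
  lia.
Qed.
Lemma bnd3 (x1 x2 x3 x4 x5 x6 x7 x8 : Z) (H : x1*x1+x2*x2+x3*x3+x4*x4+x5*x5+x6*x6+x7*x7+x8*x8 = 1 + x1*x3 + x3*x4 + x4*x5 + x5*x6 + x6*x7 + x7*x8 + x2*x4) : x3*x3 <= 28.
Proof.
  pose proof (Z.square_nonneg ((2)*x1 + (-1)*x3)).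
  pose proof (Z.square_nonneg ((2)*x2 + (-1)*x4)).
  pose proof (Z.square_nonneg ((323)*x3 + (-226)*x4)).
  pose proof (Z.square_nonneg ((517)*x4 + (-646)*x5)).
  pose proof (Z.square_nonneg ((388)*x5 + (-517)*x6)).
  pose proof (Z.square_nonneg ((259)*x6 + (-388)*x7)).
  pose proof (Z.square_nonneg ((130)*x7 + (-259)*x8)).
  pose proof (Z.square_nonneg ((1)*x8)).
  lia.
Qed.
Lemma bnd4 (x1 x2 x3 x4 x5 x6 x7 x8 : Z) (H : x1*x1+x2*x2+x3*x3+x4*x4+x5*x5+x6*x6+x7*x7+x8*x8 = 1 + x1*x3 + x3*x4 + x4*x5 + x5*x6 + x6*x7 + x7*x8 + x2*x4) : x4*x4 <= 60.
Proof.
  pose proof (Z.square_nonneg ((2)*x1 + (-1)*x3)).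
  pose proof (Z.square_nonneg ((2)*x2 + (-1)*x4)).
  pose proof (Z.square_nonneg ((3)*x3 + (-2)*x4)).
  pose proof (Z.square_nonneg ((1157)*x4 + (-1446)*x5)).
  pose proof (Z.square_nonneg ((868)*x5 + (-1157)*x6)).
  pose proof (Z.square_nonneg ((579)*x6 + (-868)*x7)).
  pose proof (Z.square_nonneg ((290)*x7 + (-579)*x8)).
  pose proof (Z.square_nonneg ((1)*x8)).
  lia.
Qed.
Lemma bnd5 (x1 x2 x3 x4 x5 x6 x7 x8 : Z) (H : x1*x1+x2*x2+x3*x3+x4*x4+x5*x5+x6*x6+x7*x7+x8*x8 = 1 + x1*x3 + x3*x4 + x4*x5 + x5*x6 + x6*x7 + x7*x8 + x2*x4) : x5*x5 <= 40.
Proof.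
  pose proof (Z.square_nonneg ((2)*x1 + (-1)*x3)).
  pose proof (Z.square_nonneg ((2)*x2 + (-1)*x4)).
  pose proof (Z.square_nonneg ((3)*x3 + (-2)*x4)).
  pose proof (Z.square_nonneg ((5)*x4 + (-6)*x5)).
  pose proof (Z.square_nonneg ((604)*x5 + (-805)*x6)).
  pose proof (Z.square_nonneg ((403)*x6 + (-604)*x7)).
  pose proof (Z.square_nonneg ((202)*x7 + (-403)*x8)).
  pose proof (Z.square_nonneg ((1)*x8)).
  lia.
Qed.
Lemma bnd6 (x1 x2 x3 x4 x5 x6 x7 x8 : Z) (H : x1*x1+x2*x2+x3*x3+x4*x4+x5*x5+x6*x6+x7*x7+x8*x8 = 1 + x1*x3 + x3*x4 + x4*x5 + x5*x6 + x6*x7 + x7*x8 + x2*x4) : x6*x6 <= 24.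
Proof.
  pose proof (Z.square_nonneg ((2)*x1 + (-1)*x3)).
  pose proof (Z.square_nonneg ((2)*x2 + (-1)*x4)).
  pose proof (Z.square_nonneg ((3)*x3 + (-2)*x4)).
  pose proof (Z.square_nonneg ((5)*x4 + (-6)*x5)).
  pose proof (Z.square_nonneg ((4)*x5 + (-5)*x6)).
  pose proof (Z.square_nonneg ((259)*x6 + (-388)*x7)).
  pose proof (Z.square_nonneg ((130)*x7 + (-259)*x8)).
  pose proof (Z.square_nonneg ((1)*x8)).
  lia.
Qed.
Lemma bnd7 (x1 x2 x3 x4 x5 x6 x7 x8 : Z) (H : x1*x1+x2*x2+x3*x3+x4*x4+x5*x5+x6*x6+x7*x7+x8*x8 = 1 + x1*x3 + x3*x4 + x4*x5 + x5*x6 + x6*x7 + x7*x8 + x2*x4) : x7*x7 <= 12.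
Proof.
  pose proof (Z.square_nonneg ((2)*x1 + (-1)*x3)).
  pose proof (Z.square_nonneg ((2)*x2 + (-1)*x4)).
  pose proof (Z.square_nonneg ((3)*x3 + (-2)*x4)).
  pose proof (Z.square_nonneg ((5)*x4 + (-6)*x5)).
  pose proof (Z.square_nonneg ((4)*x5 + (-5)*x6)).
  pose proof (Z.square_nonneg ((3)*x6 + (-4)*x7)).
  pose proof (Z.square_nonneg ((74)*x7 + (-147)*x8)).
  pose proof (Z.square_nonneg ((1)*x8)).
  lia.
Qed.
Lemma bnd8 (x1 x2 x3 x4 x5 x6 x7 x8 : Z) (H : x1*x1+x2*x2+x3*x3+x4*x4+x5*x5+x6*x6+x7*x7+x8*x8 = 1 + x1*x3 + x3*x4 + x4*x5 + x5*x6 + x6*x7 + x7*x8 + x2*x4) : x8*x8 <= 4.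
Proof.
  pose proof (Z.square_nonneg ((2)*x1 + (-1)*x3)).
  pose proof (Z.square_nonneg ((2)*x2 + (-1)*x4)).
  pose proof (Z.square_nonneg ((3)*x3 + (-2)*x4)).
  pose proof (Z.square_nonneg ((5)*x4 + (-6)*x5)).
  pose proof (Z.square_nonneg ((4)*x5 + (-5)*x6)).
  pose proof (Z.square_nonneg ((3)*x6 + (-4)*x7)).
  pose proof (Z.square_nonneg ((2)*x7 + (-3)*x8)).
  pose proof (Z.square_nonneg ((1)*x8)).
  lia.
Qed.
Lemma sqle (x k : nat) : (Z.of_nat x * Z.of_nat x < Z.of_nat (k.+1 * k.+1))%Z -> (x <= k)%coq_nat.
Proof. move=> H. Time nia. Qed.

Lemma bounds b : (S2 b = Se b + 1)%N ->
  ([/\ b 1 <= 2, b 2 <= 4, b 3 <= 5 & b 4 <= 7] /\ [/\ b 5 <= 6, b 6 <= 4, b 7 <= 3 & b 8 <= 2])%N.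
Proof.
rewrite /S2 /Se => H.
have HZ : Z.of_nat (b 1%N) * Z.of_nat (b 1%N) + Z.of_nat (b 2%N) * Z.of_nat (b 2%N) + Z.of_nat (b 3%N) * Z.of_nat (b 3%N) + Z.of_nat (b 4%N) * Z.of_nat (b 4%N) + Z.of_nat (b 5%N) * Z.of_nat (b 5%N) + Z.of_nat (b 6%N) * Z.of_nat (b 6%N) + Z.of_nat (b 7%N) * Z.of_nat (b 7%N) + Z.of_nat (b 8%N) * Z.of_nat (b 8%N) = 1 + Z.of_nat (b 1%N) * Z.of_nat (b 3%N) + Z.of_nat (b 3%N) * Z.of_nat (b 4%N) + Z.of_nat (b 4%N) * Z.of_nat (b 5%N) + Z.of_nat (b 5%N) * Z.of_nat (b 6%N) + Z.of_nat (b 6%N) * Z.of_nat (b 7%N) + Z.of_nat (b 7%N) * Z.of_nat (b 8%N) + Z.of_nat (b 2%N) * Z.of_nat (b 4%N).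
  Time lia.
have h1 := bnd1 HZ. have h2 := bnd2 HZ. have h3 := bnd3 HZ. have h4 := bnd4 HZ.
have h5 := bnd5 HZ. have h6 := bnd6 HZ. have h7 := bnd7 HZ. have h8 := bnd8 HZ.
clear H HZ.
split; split; apply/leP; apply: sqle; lia.
Qed.
End B.
Definition rootsL : seq (seq nat) := [::
  [:: 0; 0; 0; 0; 0; 0; 0; 0; 1];
  [:: 0; 0; 0; 0; 0; 0; 0; 1; 0];
  [:: 0; 0; 0; 0; 0; 0; 1; 0; 0];
  [:: 0; 0; 0; 0; 0; 1; 0; 0; 0];
  [:: 0; 0; 0; 0; 1; 0; 0; 0; 0];
  [:: 0; 0; 0; 1; 0; 0; 0; 0; 0];
  [:: 0; 0; 1; 0; 0; 0; 0; 0; 0];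
  [:: 0; 1; 0; 0; 0; 0; 0; 0; 0];
  [:: 0; 0; 0; 0; 0; 0; 0; 1; 1];
  [:: 0; 0; 0; 0; 0; 0; 1; 1; 0];
  [:: 0; 0; 0; 0; 0; 1; 1; 0; 0];
  [:: 0; 0; 0; 0; 1; 1; 0; 0; 0];
  [:: 0; 0; 0; 1; 1; 0; 0; 0; 0];
  [:: 0; 0; 1; 0; 1; 0; 0; 0; 0];
  [:: 0; 1; 0; 1; 0; 0; 0; 0; 0];
  [:: 0; 0; 0; 0; 0; 0; 1; 1; 1];
  [:: 0; 0; 0; 0; 0; 1; 1; 1; 0];
  [:: 0; 0; 0; 0; 1; 1; 1; 0; 0];
  [:: 0; 0; 0; 1; 1; 1; 0; 0; 0];
  [:: 0; 0; 1; 0; 1; 1; 0; 0; 0];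
  [:: 0; 0; 1; 1; 1; 0; 0; 0; 0];
  [:: 0; 1; 0; 1; 1; 0; 0; 0; 0];
  [:: 0; 0; 0; 0; 0; 1; 1; 1; 1];
  [:: 0; 0; 0; 0; 1; 1; 1; 1; 0];
  [:: 0; 0; 0; 1; 1; 1; 1; 0; 0];
  [:: 0; 0; 1; 0; 1; 1; 1; 0; 0];
  [:: 0; 0; 1; 1; 1; 1; 0; 0; 0];
  [:: 0; 1; 0; 1; 1; 1; 0; 0; 0];
  [:: 0; 1; 1; 1; 1; 0; 0; 0; 0];
  [:: 0; 0; 0; 0; 1; 1; 1; 1; 1];
  [:: 0; 0; 0; 1; 1; 1; 1; 1; 0];
  [:: 0; 0; 1; 0; 1; 1; 1; 1; 0];
  [:: 0; 0; 1; 1; 1; 1; 1; 0; 0];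
  [:: 0; 0; 1; 1; 2; 1; 0; 0; 0];
  [:: 0; 1; 0; 1; 1; 1; 1; 0; 0];
  [:: 0; 1; 1; 1; 1; 1; 0; 0; 0];
  [:: 0; 0; 0; 1; 1; 1; 1; 1; 1];
  [:: 0; 0; 1; 0; 1; 1; 1; 1; 1];
  [:: 0; 0; 1; 1; 1; 1; 1; 1; 0];
  [:: 0; 0; 1; 1; 2; 1; 1; 0; 0];
  [:: 0; 1; 0; 1; 1; 1; 1; 1; 0];
  [:: 0; 1; 1; 1; 1; 1; 1; 0; 0];
  [:: 0; 1; 1; 1; 2; 1; 0; 0; 0];
  [:: 0; 0; 1; 1; 1; 1; 1; 1; 1];
  [:: 0; 0; 1; 1; 2; 1; 1; 1; 0];
  [:: 0; 0; 1; 1; 2; 2; 1; 0; 0];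
  [:: 0; 1; 0; 1; 1; 1; 1; 1; 1];
  [:: 0; 1; 1; 1; 1; 1; 1; 1; 0];
  [:: 0; 1; 1; 1; 2; 1; 1; 0; 0];
  [:: 0; 1; 1; 2; 2; 1; 0; 0; 0];
  [:: 0; 0; 1; 1; 2; 1; 1; 1; 1];
  [:: 0; 0; 1; 1; 2; 2; 1; 1; 0];
  [:: 0; 1; 1; 1; 1; 1; 1; 1; 1];
  [:: 0; 1; 1; 1; 2; 1; 1; 1; 0];
  [:: 0; 1; 1; 1; 2; 2; 1; 0; 0];
  [:: 0; 1; 1; 2; 2; 1; 1; 0; 0];
  [:: 0; 0; 1; 1; 2; 2; 1; 1; 1];
  [:: 0; 0; 1; 1; 2; 2; 2; 1; 0];
  [:: 0; 1; 1; 1; 2; 1; 1; 1; 1];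
  [:: 0; 1; 1; 1; 2; 2; 1; 1; 0];
  [:: 0; 1; 1; 2; 2; 1; 1; 1; 0];
  [:: 0; 1; 1; 2; 2; 2; 1; 0; 0];
  [:: 0; 0; 1; 1; 2; 2; 2; 1; 1];
  [:: 0; 1; 1; 1; 2; 2; 1; 1; 1];
  [:: 0; 1; 1; 1; 2; 2; 2; 1; 0];
  [:: 0; 1; 1; 2; 2; 1; 1; 1; 1];
  [:: 0; 1; 1; 2; 2; 2; 1; 1; 0];
  [:: 0; 1; 1; 2; 3; 2; 1; 0; 0];
  [:: 0; 0; 1; 1; 2; 2; 2; 2; 1];
  [:: 0; 1; 1; 1; 2; 2; 2; 1; 1];
  [:: 0; 1; 1; 2; 2; 2; 1; 1; 1];
  [:: 0; 1; 1; 2; 2; 2; 2; 1; 0];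
  [:: 0; 1; 1; 2; 3; 2; 1; 1; 0];
  [:: 0; 1; 2; 2; 3; 2; 1; 0; 0];
  [:: 0; 1; 1; 1; 2; 2; 2; 2; 1];
  [:: 0; 1; 1; 2; 2; 2; 2; 1; 1];
  [:: 0; 1; 1; 2; 3; 2; 1; 1; 1];
  [:: 0; 1; 1; 2; 3; 2; 2; 1; 0];
  [:: 0; 1; 2; 2; 3; 2; 1; 1; 0];
  [:: 0; 1; 1; 2; 2; 2; 2; 2; 1];
  [:: 0; 1; 1; 2; 3; 2; 2; 1; 1];
  [:: 0; 1; 1; 2; 3; 3; 2; 1; 0];
  [:: 0; 1; 2; 2; 3; 2; 1; 1; 1];
  [:: 0; 1; 2; 2; 3; 2; 2; 1; 0];
  [:: 0; 1; 1; 2; 3; 2; 2; 2; 1];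
  [:: 0; 1; 1; 2; 3; 3; 2; 1; 1];
  [:: 0; 1; 2; 2; 3; 2; 2; 1; 1];
  [:: 0; 1; 2; 2; 3; 3; 2; 1; 0];
  [:: 0; 1; 1; 2; 3; 3; 2; 2; 1];
  [:: 0; 1; 2; 2; 3; 2; 2; 2; 1];
  [:: 0; 1; 2; 2; 3; 3; 2; 1; 1];
  [:: 0; 1; 2; 2; 4; 3; 2; 1; 0];
  [:: 0; 1; 1; 2; 3; 3; 3; 2; 1];
  [:: 0; 1; 2; 2; 3; 3; 2; 2; 1];
  [:: 0; 1; 2; 2; 4; 3; 2; 1; 1];
  [:: 0; 1; 2; 3; 4; 3; 2; 1; 0];
  [:: 0; 1; 2; 2; 3; 3; 3; 2; 1];
  [:: 0; 1; 2; 2; 4; 3; 2; 2; 1];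
  [:: 0; 1; 2; 3; 4; 3; 2; 1; 1];
  [:: 0; 2; 2; 3; 4; 3; 2; 1; 0];
  [:: 0; 1; 2; 2; 4; 3; 3; 2; 1];
  [:: 0; 1; 2; 3; 4; 3; 2; 2; 1];
  [:: 0; 2; 2; 3; 4; 3; 2; 1; 1];
  [:: 0; 1; 2; 2; 4; 4; 3; 2; 1];
  [:: 0; 1; 2; 3; 4; 3; 3; 2; 1];
  [:: 0; 2; 2; 3; 4; 3; 2; 2; 1];
  [:: 0; 1; 2; 3; 4; 4; 3; 2; 1];
  [:: 0; 2; 2; 3; 4; 3; 3; 2; 1];
  [:: 0; 1; 2; 3; 5; 4; 3; 2; 1];
  [:: 0; 2; 2; 3; 4; 4; 3; 2; 1];
  [:: 0; 1; 3; 3; 5; 4; 3; 2; 1];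
  [:: 0; 2; 2; 3; 5; 4; 3; 2; 1];
  [:: 0; 2; 2; 4; 5; 4; 3; 2; 1];
  [:: 0; 2; 3; 3; 5; 4; 3; 2; 1];
  [:: 0; 2; 3; 4; 5; 4; 3; 2; 1];
  [:: 0; 2; 3; 4; 6; 4; 3; 2; 1];
  [:: 0; 2; 3; 4; 6; 5; 3; 2; 1];
  [:: 0; 2; 3; 4; 6; 5; 4; 2; 1];
  [:: 0; 2; 3; 4; 6; 5; 4; 3; 1];
  [:: 0; 2; 3; 4; 6; 5; 4; 3; 2]].

Definition tup (b : vec) : seq nat := map b (iota 0 9).
Definition mk (t : seq nat) : vec := fun i => nth 0 t i.

Lemma nth_tup b i : i < 9 -> nth 0 (tup b) i = b i.
Proof. by move=> Hi; rewrite /tup (nth_map 0) ?size_iota // nth_iota. Qed.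

Lemma size_tup b : size (tup b) = 9.
Proof. by rewrite /tup size_map size_iota. Qed.

Lemma mk_tup b : supported b -> mk (tup b) = b.
Proof.
move=> Hb; apply: functional_extensionality => i; rewrite /mk.
case: (ltnP i 9) => Hi; first by rewrite nth_tup.
rewrite nth_default ?size_tup //; symmetry; apply: Hb; by rewrite orbC Hi.
Qed.

Lemma tup_mk t : size t = 9 -> tup (mk t) = t.
Proof. by move=> Hs; rewrite /tup /mk -{2}(mkseq_nth 0 t) Hs. Qed.

Definition Eb (t : seq nat) : bool := S2 (mk t) == Se (mk t) + 1.

Section BC.
Local Open Scope Z_scope.
Definition boxcheck : bool :=
  all (fun x1 => let z1 := Z.of_nat x1 in let d1 := z1*z1 in
  all (fun x2 => let z2 := Z.of_nat x2 in let d2 := d1 + z2*z2 in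
  all (fun x3 => let z3 := Z.of_nat x3 in let d3 := d2 + z3*z3 - z1*z3 in
  all (fun x4 => let z4 := Z.of_nat x4 in let d4 := d3 + z4*z4 - z3*z4 - z2*z4 in
  all (fun x5 => let z5 := Z.of_nat x5 in let d5 := d4 + z5*z5 - z4*z5 in
  all (fun x6 => let z6 := Z.of_nat x6 in let d6 := d5 + z6*z6 - z5*z6 in
  all (fun x7 => let z7 := Z.of_nat x7 in let d7 := d6 + z7*z7 - z6*z7 in
  all (fun x8 => let z8 := Z.of_nat x8 in
    if Z.eqb (d7 + z8*z8 - z7*z8) 1 then ([:: 0; x1; x2; x3; x4; x5; x6; x7; x8]%N \in rootsL) else true)
  (iota 0 3)) (iota 0 4)) (iota 0 5)) (iota 0 7))
  (iota 0 8)) (iota 0 6)) (iota 0 5)) (iota 0 3).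
End BC.

Lemma boxcheck_ok : boxcheck.
Proof. by vm_compute. Qed.

Lemma pos_root_tup b : pos_root b -> tup b \in rootsL.
Proof.
move=> [Hs [_ Hn]].
have H := normsq2 Hn.
have [[h1 h2 h3 h4] [h5 h6 h7 h8]] := bounds H.
have H0 : b 0 = 0 by apply: Hs.
have -> : tup b = [:: 0; b 1; b 2; b 3; b 4; b 5; b 6; b 7; b 8] by rewrite /tup /= H0.
have := boxcheck_ok.
move=> /allP/(_ (b 1)); rewrite mem_iota => /(_ h1).
move=> /allP/(_ (b 2)); rewrite mem_iota => /(_ h2).
move=> /allP/(_ (b 3)); rewrite mem_iota => /(_ h3).
move=> /allP/(_ (b 4)); rewrite mem_iota => /(_ h4).
move=> /allP/(_ (b 5)); rewrite mem_iota => /(_ h5).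
move=> /allP/(_ (b 6)); rewrite mem_iota => /(_ h6).
move=> /allP/(_ (b 7)); rewrite mem_iota => /(_ h7).
move=> /allP/(_ (b 8)); rewrite mem_iota => /(_ h8).
have HE : Z.eqb (Z.of_nat (b 1) * Z.of_nat (b 1) + Z.of_nat (b 2) * Z.of_nat (b 2) + Z.of_nat (b 3) * Z.of_nat (b 3) - Z.of_nat (b 1) * Z.of_nat (b 3) + Z.of_nat (b 4) * Z.of_nat (b 4) - Z.of_nat (b 3) * Z.of_nat (b 4) - Z.of_nat (b 2) * Z.of_nat (b 4) + Z.of_nat (b 5) * Z.of_nat (b 5) - Z.of_nat (b 4) * Z.of_nat (b 5) + Z.of_nat (b 6) * Z.of_nat (b 6) - Z.of_nat (b 5) * Z.of_nat (b 6) + Z.of_nat (b 7) * Z.of_nat (b 7) - Z.of_nat (b 6) * Z.of_nat (b 7) + Z.of_nat (b 8) * Z.of_nat (b 8) - Z.of_nat (b 7) * Z.of_nat (b 8)) 1.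
  apply/Z.eqb_spec. move: H; rewrite /S2 /Se. lia.
by rewrite /= HE.
Qed.

Definition mvalb (s : nat) (t : seq nat) : bool :=
  (nth 0 t s != 0) && all (fun i => nth 0 t i == 0) (iota s.+1 (8 - s)).
Definition mb (s : nat) (t : seq nat) : bool :=
  if s == 3 then mvalb 2 t || mvalb 3 t else mvalb s t.
Definition stratL (s : nat) : seq (seq nat) := [seq t <- rootsL | mb s t].

Lemma mvalP b s : supported b -> s <= 8 -> mval b s <-> mvalb s (tup b).
Proof.
move=> Hb Hs; split.
- move=> [H1 H2]; apply/andP; split; first by rewrite nth_tup.
  apply/allP => i; rewrite mem_iota => /andP[Hi1 Hi2].
  rewrite nth_tup; last by lia.
  by rewrite H2.
- move=> /andP[H1 /allP H2]; split; first by rewrite -nth_tup.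
  move=> i Hi; case: (ltnP 8 i) => Hi8; first by apply: Hb; rewrite Hi8 orbT.
  have := H2 i; rewrite mem_iota.
  have -> : (s < i) && (i < s.+1 + (8 - s)) by apply/andP; split; lia.
  by rewrite nth_tup // => /(_ isT)/eqP.
Qed.

Definition rootsL_ok : bool :=
  all (fun t => [&& size t == 9, nth 0 t 0 == 0, S2 (mk t) == Se (mk t) + 1 &
                  has (fun i => nth 0 t i != 0) (iota 0 9)]) rootsL.
Lemma rootsL_okP : rootsL_ok.
Proof. by vm_compute. Qed.

Lemma rootsL_size t : t \in rootsL -> size t = 9.
Proof. by move=> Ht; have /allP/(_ t Ht)/and4P[/eqP] := rootsL_okP. Qed.

Lemma stratL_size s t : t \in stratL s -> size t = 9.
Proof. by rewrite mem_filter => /andP[_]; apply: rootsL_size. Qed.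

Lemma stratum_tup s b : 3 <= s <= 8 -> stratum s b -> tup b \in stratL s.
Proof.
move=> /andP[Hs1 Hs2] [Hr Hm].
have Hsup := Hr.1.
rewrite mem_filter pos_root_tup // andbT /mb.
have [Hs3|Hs3] := eqVneq s 3.
- subst s; case: Hm => Hm; apply/orP; [left|right]; by apply/mvalP.
- rewrite (negbTE Hs3) in Hm *; by apply/mvalP.
Qed.

Lemma stratum_mk s t : 3 <= s <= 8 -> t \in stratL s -> stratum s (mk t).
Proof.
move=> /andP[Hs1 Hs2]; rewrite mem_filter => /andP[Hm Ht].
have /allP/(_ t Ht)/and4P[/eqP Hsz /eqP H0 /eqP HE /hasP[i _ Hi]] := rootsL_okP.
have Hsup : supported (mk t).
  move=> i' /orP[/eqP -> //|Hi']; rewrite /mk nth_default //; by rewrite Hsz.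
split; first split => //.
- split; first by exists i.
  exact: normsq2'.
- move: Hm; rewrite /mb -{1 2 3}(tup_mk Hsz).
  have [Hs3|Hs3] := eqVneq s 3.
  + subst s => /= /orP[H|H]; [left|right]; by apply/mvalP.
  + rewrite ?(negbTE Hs3) => H; by apply/mvalP.
Qed.

Definition addk (t : seq nat) (k : nat) : seq nat := [seq nth 0 t i + (i == k) | i <- iota 0 9].
Definition adjb (t t' : seq nat) : bool :=
  has (fun k => (t == addk t' k) || (t' == addk t k)) (iota 1 8).

Lemma diffP b b' : supported b -> supported b' ->
  diff_simple b b' <-> exists2 k, 1 <= k <= 8 & tup b = addk (tup b') k.
Proof.
move=> Hb Hb'; split.
- move=> [k Hk H]; exists k => //.
  apply: (@eq_from_nth _ 0); first by rewrite size_tup /addk size_map size_iota.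
  move=> i; rewrite size_tup => Hi.
  rewrite nth_tup // /addk (nth_map 0) ?size_iota // nth_iota // add0n nth_tup //.
- move=> [k Hk H]; exists k => // i.
  case: (ltnP i 9) => Hi.
  + by rewrite -nth_tup // H /addk (nth_map 0) ?size_iota // nth_iota // add0n nth_tup.
  + rewrite Hb ?Hb'; [|by apply/orP; right; lia..].
    have -> : (i == k) = false by apply/negbTE/eqP; lia.
    by [].
Qed.

Lemma HadjP b b' : supported b -> supported b' -> H_adj b b' <-> adjb (tup b) (tup b').
Proof.
move=> Hb Hb'; split.
- case => [/(diffP Hb Hb')|/(diffP Hb' Hb)] [k Hk H]; apply/hasP; exists k;
    (try by rewrite mem_iota; lia); by rewrite H eqxx ?orbT.
- move=> /hasP[k]; rewrite mem_iota => Hk /orP[/eqP H|/eqP H].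
  + by left; apply/(diffP Hb Hb'); exists k => //; lia.
  + by right; apply/(diffP Hb' Hb); exists k => //; lia.
Qed.
Opaque stratL rootsL.

Definition NbT (s : nat) : seq (seq nat) :=
  let L := stratL s in let n := size L in
  [seq [seq w <- iota 0 n | adjb (nth [::] L u) (nth [::] L w)] | u <- iota 0 n].

Notation aidx s := (index (tup (alpha s)) (stratL s)).

Definition okv (s a : nat) (nb : seq (seq nat)) (p : seq nat) (u : nat) : bool :=
  let pu := nth 0 p u in let N := nth [::] nb u in
  [&& 0 < pu <= s, (u == a) ==> (pu == s),
      all (fun w => (w < size p) ==> dyn_adj pu (nth 0 p w)) N &
      all (fun w => w < size p) N ==>
        all (fun j => dyn_adj pu j ==> has (fun w => nth 0 p w == j) N) (iota 1 s)].

Definition okp (s a : nat) (nb : seq (seq nat)) (p : seq nat) : bool :=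
  all (okv s a nb p) (iota 0 (size p)).

Fixpoint solsT (s a : nat) (nb : seq (seq nat)) (k : nat) : seq (seq nat) :=
  if k is k'.+1 then
    flatten [seq [seq rcons p v | v <- [seq v <- iota 1 s | okp s a nb (rcons p v)]]
            | p <- solsT s a nb k']
  else [:: [::]].

Definition sols (s : nat) : seq (seq nat) := solsT s (aidx s) (NbT s) (size (stratL s)).

Lemma mem_iota0 n u : (u \in iota 0 n) = (u < n).
Proof. by rewrite mem_iota. Qed.

Lemma okp_take s a nb f k : okp s a nb f -> okp s a nb (take k f).
Proof.
move=> /allP Hf; apply/allP => u; rewrite mem_iota0 => Hu.
have Hsz : size (take k f) <= size f by rewrite size_take; case: ifP => // /ltnW.
have Hm : forall w, w < size (take k f) -> nth 0 (take k f) w = nth 0 f w.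
  move=> w Hw; rewrite nth_take //; move: Hw; rewrite size_take; case: ifP => //; lia.
have := Hf u; rewrite mem_iota0 => /(_ (leq_trans Hu Hsz)) /and4P[H1 H2 H3 H4].
rewrite /okv (Hm u Hu); apply/and4P; split => //.
- apply/allP => w Hw; apply/implyP => Hwm; rewrite Hm //.
  have := allP H3 w Hw => /implyP; apply; lia.
- apply/implyP => /allP Hall.
  have Hall' : all (fun w => w < size f) (nth [::] nb u).
    by apply/allP => w Hw; have := Hall w Hw; lia.
  move: H4 => /implyP/(_ Hall')/allP H4.
  apply/allP => j Hj; apply/implyP => Hd.
  have := H4 j Hj => /implyP/(_ Hd) /hasP[w Hw Hwj].
  by apply/hasP; exists w => //; rewrite Hm // Hall.
Qed.

Lemma sols_complete s a nb f : okp s a nb f ->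
  forall k, k <= size f -> take k f \in solsT s a nb k.
Proof.
move=> Hf; elim=> [|k IH] Hk /=.
- by rewrite take0 inE.
- rewrite (take_nth 0) //; apply/flatten_mapP; exists (take k f); first by apply: IH; lia.
  apply: map_f; rewrite mem_filter -(take_nth 0) // okp_take // andTb.
  have := allP Hf k; rewrite mem_iota0 => /(_ Hk) /and4P[/andP[H1 H2] _ _ _].
  rewrite mem_iota; lia.
Qed.

Lemma supported_alpha s : 1 <= s <= 8 -> supported (alpha s).
Proof.
move=> Hs i Hi; rewrite /alpha.
have -> : (i == s) = false by apply/negbTE/eqP; move: Hi => /orP[/eqP|]; lia.
by [].
Qed.

Lemma good_okp s h : 3 <= s <= 8 -> good_h s h -> tup (alpha s) \in stratL s ->
  okp s (aidx s) (NbT s) (map (fun t => h (mk t)) (stratL s)).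
Proof.
move=> Hs [Hr Ha Hhom Hsurj] Hain.
have Hs' : 3 <= s /\ s <= 8 by move: Hs => /andP.
set L := stratL s. set f := map _ L.
have Hsf : size f = size L by rewrite size_map.
apply/allP => u; rewrite mem_iota0 Hsf => Hu.
set t := nth [::] L u.
have HtL : t \in L by rewrite /t mem_nth.
have Hst := stratum_mk Hs HtL.
have Hfu : forall w, w < size L -> nth 0 f w = h (mk (nth [::] L w)).
  by move=> w Hw; rewrite (nth_map [::]).
have HNb : nth [::] (NbT s) u = [seq w <- iota 0 (size L) | adjb t (nth [::] L w)].
  rewrite /NbT (nth_map 0); last by rewrite size_iota.
  by rewrite nth_iota.
rewrite /okv HNb Hfu // Hsf -/t.
have /andP[H1 H2] := Hr _ Hst.
apply/and4P; split.
- by rewrite H1 H2.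
- apply/implyP => /eqP Hua.
  have -> : t = tup (alpha s) by rewrite /t Hua nth_index.
  rewrite mk_tup ?Ha //; apply: supported_alpha; apply/andP; lia.
- apply/allP => w; rewrite mem_filter mem_iota0 => /andP[Hadj Hw].
  apply/implyP => _; rewrite Hfu //.
  have HwL : nth [::] L w \in L by rewrite mem_nth.
  have Hsw := stratum_mk Hs HwL.
  have : H_adj (mk t) (mk (nth [::] L w)).
    apply/(HadjP Hst.1.1 Hsw.1.1).
    by rewrite (tup_mk (stratL_size HtL)) (tup_mk (stratL_size HwL)).
  by move=> /(Hhom _ _ Hst Hsw) [].
- apply/implyP => _; apply/allP => j; rewrite mem_iota => Hj; apply/implyP => Hd.
  have HD : Dyn_adj s (h (mk t)) j by split; [rewrite H1 H2 | apply/andP; split; lia | exact Hd].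
  have [b' [Hsb' Hadj Hb'j]] := Hsurj _ Hst _ HD.
  have Hb'L := stratum_tup Hs Hsb'.
  apply/hasP; exists (index (tup b') L).
  + rewrite mem_filter mem_iota0 index_mem Hb'L andbT /= nth_index //.
    have := (HadjP Hst.1.1 Hsb'.1.1).1 Hadj.
    by rewrite (tup_mk (stratL_size HtL)).
  + by rewrite Hfu ?index_mem // nth_index // mk_tup ?Hb'j //; case: Hsb' => [[]].
Qed.

Lemma in_sols s h : 3 <= s <= 8 -> tup (alpha s) \in stratL s -> good_h s h ->
  map (fun t => h (mk t)) (stratL s) \in sols s.
Proof.
move=> Hs Hain Hg.
have := sols_complete (good_okp Hs Hg Hain) (leqnn _).
by rewrite take_size size_map.
Qed.

Definition hF (s : nat) : vec -> nat :=
  fun b => nth 0 (head [::] (sols s)) (index (tup b) (stratL s)).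

Lemma exist_good s : 3 <= s <= 8 ->
  okp s (aidx s) (NbT s) (head [::] (sols s)) ->
  size (head [::] (sols s)) = size (stratL s) ->
  uniq (stratL s) -> tup (alpha s) \in stratL s -> good_h s (hF s).
Proof.
move=> Hs Hok Hsz Hu Hain.
have Hs' : 3 <= s /\ s <= 8 by move: Hs => /andP.
rewrite /hF; set F := head [::] (sols s); set L := stratL s.
have Hokv : forall u, u < size L -> okv s (aidx s) (NbT s) F u.
  by move=> u Hu'; apply: (allP Hok); rewrite mem_iota0 Hsz.
have HNb : forall u, u < size L ->
    nth [::] (NbT s) u = [seq w <- iota 0 (size L) | adjb (nth [::] L u) (nth [::] L w)].
  move=> u Hu'; rewrite /NbT (nth_map 0); last by rewrite size_iota.
  by rewrite nth_iota.
have Hrange : forall b, stratum s b -> 0 < nth 0 F (index (tup b) L) <= s.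
  move=> b Hb; have HbL := stratum_tup Hs Hb.
  have Hui : index (tup b) L < size L by rewrite index_mem.
  by have /and4P[] := Hokv _ Hui.
split.
- exact: Hrange.
- have Hai : aidx s < size L by rewrite index_mem.
  have /and4P[_ /implyP H _ _] := Hokv _ Hai.
  by apply/eqP; apply: H; rewrite eqxx.
- move=> b b' Hb Hb' Hadj.
  have HbL := stratum_tup Hs Hb; have Hb'L := stratum_tup Hs Hb'.
  have Hui : index (tup b) L < size L by rewrite index_mem.
  have Hwi : index (tup b') L < size L by rewrite index_mem.
  have /and4P[_ _ H3 _] := Hokv _ Hui.
  split; [exact: Hrange | exact: Hrange |].
  have := allP H3 (index (tup b') L).
  rewrite HNb // mem_filter mem_iota0 Hwi andbT !nth_index //.
  move=> /(_ ((HadjP Hb.1.1 Hb'.1.1).1 Hadj)) /implyP; apply; by rewrite Hsz.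
- move=> b Hb j [Hj1 Hj2 Hd].
  have HbL := stratum_tup Hs Hb.
  have Hui : index (tup b) L < size L by rewrite index_mem.
  have /and4P[_ _ _ /implyP H4] := Hokv _ Hui.
  rewrite HNb // nth_index // in H4.
  have : all (fun w => w < size F) [seq w <- iota 0 (size L) | adjb (tup b) (nth [::] L w)].
    by apply/allP => w; rewrite mem_filter mem_iota0 Hsz => /andP[].
  move=> /H4 /allP /(_ j); rewrite mem_iota => /(_ ltac:(lia)) /implyP /(_ Hd) /hasP[w].
  rewrite mem_filter mem_iota0 => /andP[Hadj Hw] /eqP Hwj.
  have HwL : nth [::] L w \in L by rewrite mem_nth.
  have Hsw := stratum_mk Hs HwL.
  have Hsz9 := stratL_size HwL.
  exists (mk (nth [::] L w)); split => //.
  + by apply/(HadjP Hb.1.1 Hsw.1.1); rewrite tup_mk.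
  + by rewrite tup_mk // index_uniq.
Qed.

Definition check (s : nat) : bool :=
  [&& size (sols s) == 1, okp s (aidx s) (NbT s) (head [::] (sols s)),
      size (head [::] (sols s)) == size (stratL s), uniq (stratL s) &
      tup (alpha s) \in stratL s].

Lemma main_s s : 3 <= s <= 8 -> check s ->
  exists h : vec -> nat, good_h s h /\
    forall h' : vec -> nat, good_h s h' -> forall b, stratum s b -> h' b = h b.
Proof.
move=> Hs /and5P[H1 H2 /eqP H3 H4 H5].
exists (hF s); split; first exact: exist_good.
move=> h' Hg b Hb.
have Hm := in_sols Hs H5 Hg.
have HbL := stratum_tup Hs Hb.
rewrite -{1}(mk_tup Hb.1.1) /hF.
move: Hm H1; case: (sols s) => [|F0 [|]] //= ; rewrite inE => /eqP <- _.
by rewrite (nth_map [::]) ?index_mem // nth_index.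
Qed.

Transparent stratL rootsL.
Lemma sols8 : sols 8 = [::].
Proof. by vm_compute. Qed.

Lemma alpha8 : tup (alpha 8) \in stratL 8.
Proof. by vm_compute. Qed.

Theorem mainTheorem12 :
  (forall s : nat, 3 <= s <= 7 ->
     exists h : vec -> nat,
       good_h s h /\
       forall h' : vec -> nat, good_h s h' -> forall b, stratum s b -> h' b = h b)
  /\ ~ (exists h : vec -> nat, good_h 8 h).
Proof.
split.
- move=> s /andP[H1 H2]; apply: main_s; first by apply/andP; split => //; lia.
  move: H1 H2; case: s => [|[|[|[|[|[|[|[|s]]]]]]]] H1 H2; try lia.
  all: try by vm_compute.
- move=> [h Hg].
  have := in_sols (isT : 3 <= 8 <= 8) alpha8 Hg.
  by rewrite sols8.
Qed.
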